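(* Let $Q$ be a quiver, let $C\subseteq\Bbbk Q$ be a monomial subcoalgebra, and let $I\subseteq C$ be a left $C^*$-submodule of $C$ that embeds (as a left $C^*$-module) in a free left $C^*$-module. Let $e\in I$ be a vertex. Then there exists a path $p\in C$ such that: (i) for every path $q\in I$ starting at $e$, $p=qp'$ for some path $p'\in C$; (ii) for every non-trivial path $r\in C$ ending at $e$, $rp\notin C$.
   Context: $\Bbbk$ is a field. The path coalgebra $\Bbbk Q$ has basis all paths of $Q$ (including trivial paths, identified with vertices), with $\Delta(p)=\sum_{xy=p}x\otimes y$ where $xy$ denotes concatenation ($x$ followed by $y$, defined when the target of $x$ is the source of $y$), and $\varepsilon(p)=1$ if $p$ is trivial, $0$ otherwise. A subcoalgebra $C\subseteq\Bbbk Q$ is monomial if it contains all vertices and arrows of $Q$ and has a linear basis consisting of paths. The dual algebra $C^*$ has product $(fg)(x)=\sum f(x_1)g(x_2)$ and $C$ is a left $C^*$-module via $f\rightharpoonup x=\sum x_1f(x_2)$. *)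

(* Defs.v *)
From HB Require Import structures.
From mathcomp Require Import all_boot all_order all_algebra.
From mathcomp Require Import finmap.
From mathcomp Require Import monalg.
From Stdlib Require List.
Set Implicit Arguments. Unset Strict Implicit. Unset Printing Implicit Defensive.
Import GRing.Theory.
Local Open Scope ring_scope.

(* A path word is a pair (v, [:: a1; ...; an]): the starting
   vertex and the list of arrows; it is a path when it is composable. *)
Section Quiver.
Variables (V A : choiceType) (s t : A -> V).

Definition word := (V * seq A)%type.

Definition is_path (w : word) : bool :=
  match w.2 with
  | [::] => true
  | a :: l => (s a == w.1) && path (fun a b => t a == s b) a l
  end.

Definition psrc (w : word) : V := w.1.
Definition ptgt (w : word) : V := last w.1 (map t w.2).
Definition trivial_path (v : V) : word := (v, [::]).
Definition nontrivial (w : word) : bool := w.2 != [::].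

(* concatenation x y (x followed by y, meaningful when ptgt x = psrc y) *)
Definition concat (x y : word) : word := (x.1, x.2 ++ y.2).

Definition splits (p : word) : seq (word * word) :=
  [seq ((p.1, take i p.2), (ptgt (p.1, take i p.2), drop i p.2))
  | i <- iota 0 (size p.2).+1].

Variable k : fieldType.

(* the path coalgebra kQ (ambient: finitely supported combinations of words;
   only combinations of paths matter) and its tensor square *)
Definition kQ := {malg k[word]}.
Definition kQ2 := {malg k[(word * word)%type]}.

Definition Delta (x : kQ) : kQ2 :=
  \sum_(p <- msupp x) x@_p *: \sum_(xy <- splits p) << xy >>.

Variable inC : pred word.   (* the set of paths spanning C *)

Definition in_C (x : kQ) : Prop := forall p, p \in msupp x -> inC p.
Definition in_CC (z : kQ2) : Prop :=
  forall pq, pq \in msupp z -> inC pq.1 /\ inC pq.2.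

Definition monomial_subcoalgebra : Prop :=
  [/\ forall p, inC p -> is_path p,
      forall v, inC (trivial_path v),
      forall a, inC (s a, [:: a])
    & forall x, in_C x -> in_CC (Delta x)].

(* The dual algebra of C: functionals on C, i.e. functions on the basis paths
   (values outside inC are irrelevant).  Equality in the dual: *)
Definition dual := word -> k.
Definition dual_eq (f g : dual) : Prop := forall p, inC p -> f p = g p.

Definition dual_mul (f g : dual) : dual :=
  fun p => \sum_(xy <- splits p) f xy.1 * g xy.2.
Definition dual_add (f g : dual) : dual := fun p => f p + g p.

Definition act (f : dual) (x : kQ) : kQ :=
  \sum_(p <- msupp x) x@_p *: \sum_(xy <- splits p) f xy.2 *: << xy.1 >>.

Definition left_submodule (I : kQ -> Prop) : Prop :=
  [/\ forall x, I x -> in_C x,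
      I 0,
      forall x y, I x -> I y -> I (x + y)
    & forall f x, I x -> I (act f x)].

(* I embeds, as a left module over the dual algebra, in a free module
   = finitely supported families J -> dual. *)
Definition embeds_in_free (I : kQ -> Prop) : Prop :=
  exists (J : Type) (phi : kQ -> J -> dual),
    [/\ forall x, I x -> exists js : seq J,
          forall j, ~ List.In j js -> dual_eq (phi x j) (fun _ => 0),
        forall x y, I x -> I y -> forall j,
          dual_eq (phi (x + y) j) (dual_add (phi x j) (phi y j)),
        forall f x, I x -> forall j,
          dual_eq (phi (act f x) j) (dual_mul f (phi x j))
      & forall x y, I x -> I y -> (forall j, dual_eq (phi x j) (phi y j)) ->
          x = y].

End Quiver.

(* Main.v *)
Require Import Defs.
From HB Require Import structures.
From mathcomp Require Import all_boot all_order all_algebra.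
From mathcomp Require Import finmap.
From mathcomp Require Import monalg.
From Stdlib Require Import Classical.
From mathcomp Require Import zify.
Set Implicit Arguments. Unset Strict Implicit.
Import GRing.Theory.
Local Open Scope ring_scope.

Definition delta (V A : choiceType) (k : fieldType) (w : word V A) : dual V A k :=
  fun u => if u == w then 1 else 0.

Lemma msupp1 (K : choiceType) (k : fieldType) (q : K) :
  msupp (<< q >> : {malg k[K]}) = [fset q]%fset.
Proof. by rewrite msuppU oner_eq0. Qed.

Lemma mcoeff1 (K : choiceType) (k : fieldType) (q q' : K) :
  (<< q >> : {malg k[K]})@_q' = (q == q')%:R.
Proof. by rewrite mcoeffU. Qed.

Lemma arith1 (m n : nat) : (0 < n)%N -> (n < 1 + m)%N -> (m - n)%N = m -> False.
Proof. lia. Qed.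

Lemma arith2 (m i i' : nat) : (i < 0 + m.+1)%N -> (i' < 0 + m.+1)%N ->
  (if (i < m)%N then i else m) = (if (i' < m)%N then i' else m) -> i = i'.
Proof. move=> h1 h2; case: (ltnP i m); case: (ltnP i' m); lia. Qed.

Lemma arith3 (m m' i : nat) : (0 <= i)%N -> (i < 0 + (m + m').+1)%N ->
  (if (i < m + m')%N then i else m + m') = m -> i = m.
Proof. move=> h1 h2; case: (ltnP i (m + m')); lia. Qed.

Lemma act_delta_self (V A : choiceType) (t : A -> V) (k : fieldType) (q : word V A) :
  @act V A t k (delta k q) << q >> = << (q.1, [::]) >>.
Proof.
case: q => v l.
rewrite /act msupp1 big_seq_fset1 mcoeff1 eqxx scale1r /splits /= big_cons big_map.
rewrite /delta /= take0 drop0 eqxx scale1r big1_seq ?addr0 // => i /andP [_].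
rewrite mem_iota => /andP [hi1 hi2].
case: eqP; last by rewrite scale0r.
move=> [_ h]; have := congr1 size h; rewrite size_drop => hs; exfalso; exact: (arith1 hi1 hi2 hs).
Qed.

Lemma act_delta_triv (V A : choiceType) (t : A -> V) (k : fieldType) (r : word V A) v :
  nontrivial r -> @act V A t k (delta k r) << (v, [::]) >> = 0.
Proof.
case: r => w l; rewrite /nontrivial /= => hl.
rewrite /act msupp1 big_seq_fset1 mcoeff1 eqxx scale1r /splits /= big_cons big_nil.
rewrite /delta /=; case: eqP => [[_ h]|_]; last by rewrite scale0r addr0.
by rewrite -h eqxx in hl.
Qed.

Lemma sum_neq0 (T : eqType) (k : fieldType) (s : seq T) (F : T -> k) :
  \sum_(x <- s) F x != 0 -> exists2 x, x \in s & F x != 0.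
Proof.
elim: s => [|x s IH]; first by rewrite big_nil eqxx.
rewrite big_cons; case: (boolP (F x == 0)) => [/eqP ->|hx _]; last by exists x; rewrite ?mem_head.
rewrite add0r => /IH [y hy hFy]; exists y => //; by rewrite in_cons hy orbT.
Qed.

Lemma uniq_splits (V A : choiceType) (t : A -> V) (p : word V A) :
  uniq (splits t p).
Proof.
rewrite /splits map_inj_in_uniq ?iota_uniq // => i i'.
rewrite !mem_iota => /andP [_ hi] /andP [_ hi'] [h _].
move=> _; have := congr1 size h; rewrite !size_take => hs; exact: (arith2 hi hi' hs).
Qed.

Lemma split_inC (V A : choiceType) (s t : A -> V) (k : fieldType) (inC : pred (word V A)) :
  @monomial_subcoalgebra V A s t k inC -> forall p xy, inC p -> xy \in splits t p ->
  inC xy.1 /\ inC xy.2.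
Proof.
move=> [_ _ _ HD] p xy hp hxy.
have hC : in_C inC (<< p >> : kQ V A k) by move=> w; rewrite msupp1 inE => /eqP ->.
apply: (HD _ hC).
suff : (Delta t <<p>> : kQ2 V A k)@_xy != 0 by rewrite mcoeff_eq0 negbK.
rewrite /Delta msupp1 big_seq_fset1 mcoeff1 eqxx scale1r.
rewrite raddf_sum (bigD1_seq xy) ?uniq_splits //= mcoeff1 eqxx big1 ?addr0 ?oner_eq0 //.
by move=> z hz; rewrite mcoeff1 (negbTE hz).
Qed.

Lemma mul_delta_concat (V A : choiceType) (t : A -> V) (k : fieldType) (r p : word V A) (g : dual V A k) :
  ptgt t r = p.1 -> @dual_mul V A t k (delta k r) g (concat r p) = g p.
Proof.
case: r => w l; case: p => v m /= hr.
rewrite /dual_mul /splits /concat big_map (bigD1_seq (size l)) ?iota_uniq //; last first.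
  by rewrite mem_iota size_cat /=; lia.
rewrite /=.
rewrite take_size_cat // drop_size_cat // /delta eqxx mul1r hr.
rewrite big1_seq ?addr0 // => i /andP [hi hin]; have : i \in iota 0 (size (l ++ m)).+1 := hin; rewrite mem_iota => {}hin.
case: eqP; last by rewrite mul0r.
move=> [h]; have := congr1 size h; rewrite size_take size_cat => hs; rewrite size_cat in hin; case/andP: hin => h1 h2; by move: hi; rewrite (arith3 h1 h2 hs) eqxx.
Qed.

Theorem lemma4p5 (V A : choiceType) (s t : A -> V) (k : fieldType)
  (inC : pred (word V A)) (I : kQ V A k -> Prop)
  (HC : @monomial_subcoalgebra V A s t k inC)
  (HI : @left_submodule V A t k inC I)
  (Hfree : @embeds_in_free V A t k inC I)
  (e : V) (He : I << trivial_path A e >>) :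
  exists p : word V A, [/\ is_path s t p, inC p,
    (forall q : word V A, is_path s t q -> I << q >> -> psrc q = e ->
       exists p' : word V A, [/\ is_path s t p', inC p',
          ptgt t q = psrc p' & p = concat q p'])
  & (forall r : word V A, is_path s t r -> inC r -> nontrivial r ->
       ptgt t r = e -> ~~ inC (concat r p))].
Proof.
have HC' := HC.
move: HC => [Hpath _ _ _].
move: HI => [_ HI0 _ _].
move: Hfree => [J [phi [_ Hadd Hact Hinj]]].
have phi0 : forall j p, inC p -> phi 0 j p = 0.
  move=> j p hp; have := Hadd 0 0 HI0 HI0 j p hp; rewrite addr0 /dual_add => h.
  have : phi 0 j p + phi 0 j p - phi 0 j p = phi 0 j p - phi 0 j p by rewrite -h.
  by rewrite addrK subrr.
have [j [p [hp hne]]] : exists j p, inC p /\ phi << trivial_path A e >> j p != 0.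
  apply: NNPP => hcon.
  have h0 : << trivial_path A e >> = 0 :> kQ V A k.
    apply: Hinj => // j p hp; rewrite phi0 //; apply/eqP; apply: contraT => hn.
    by case: hcon; exists j, p; split.
  have := congr1 (fun x : kQ V A k => x@_(trivial_path A e)) h0.
  by rewrite /= mcoeff1 eqxx mcoeff0 => /eqP; rewrite oner_eq0.
have Hi : forall q : word V A, I << q >> -> psrc q = e ->
    exists p' : word V A, [/\ is_path s t p', inC p',
          ptgt t q = psrc p' & p = concat q p'].
  move=> q Iq hq.
  have h := Hact (delta k q) << q >> Iq j p hp.
  rewrite act_delta_self /= in h.
  rewrite /psrc in hq; rewrite hq in h.
  rewrite /trivial_path h /dual_mul in hne.
  have [xy hxy hxy0] := sum_neq0 hne.
  have [_ hC2] := split_inC HC' hp hxy.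
  move: hxy0; rewrite /delta; case: (xy.1 =P q) => [hq1 _|]; last by rewrite mul0r eqxx.
  exists xy.2; split => //.
  - exact: Hpath.
  - by move: hxy hq1 => /mapP [i _ ->] /= <-.
  - move: hxy hq1 => /mapP [i _ ->] /= <-; rewrite /concat /= cat_take_drop.
    by case: (p).
have [p0 [_ _ _ hpe]] := Hi _ He erefl.
exists p; split => //.
- exact: Hpath.
- move=> q _; exact: Hi.
- move=> r _ _ hr hre; apply/negP => hc.
  have h := Hact (delta k r) << trivial_path A e >> He j (concat r p) hc.
  rewrite act_delta_triv // phi0 // mul_delta_concat in h; last by rewrite hre hpe.
  by rewrite -h eqxx in hne.
Qed.
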